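(* Let $\theta\in\mathbb{R}$, let $U\subset\mathbb{R}^4$ be a connected open set, identified with an open subset of $\mathbb{C}^2$ via $z_1=x^2+ix^1$, $z_2=x^4+ix^3$, and let $\omega^\pm:U\to M_4(\mathbb{R})$ be smooth with $\omega^\pm(x)$ antisymmetric and $\star\omega^\pm(x)=\pm\omega^\pm(x)$ for all $x\in U$. Assume $\det[E_4-\omega^\pm\theta^\mp]\neq0$ on $U$ and that for each $x$ the matrix $g^\pm(x):=2\left(E_4-\omega^\pm(x)\theta^\mp\right)^{-1}-E_4$ lies in the image of $\iota_{sym}$. Put $h^\pm:=\iota_{sym}^{-1}[g^\pm]$. Then $h^\pm$ is a smooth map to Hermitian $2\times 2$ matrices which is either positive definite at every point of $U$ or negative definite at every point of $U$, $\det[h^\pm]=1$ on $U$, and hence its Ricci curvature $R_{\bar jk}=\partial_{\bar z_j}\partial_{z_k}\log\det[h^\pm]$ vanishes identically on $U$ (i.e. $h^\pm$ is a local Ricci-flat Hermitian metric).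
   Context: $E_4$ is the $4\times4$ identity matrix. For a real antisymmetric $4\times 4$ matrix $\omega=(\omega_{kl})$, $(\star\omega)_{kl}=\frac12\sum_{m,n=1}^4\varepsilon_{klmn}\omega_{mn}$ ($\varepsilon$ the Levi-Civita symbol). For $\theta\in\mathbb{R}$, $\theta^{\pm}$ denotes the $4\times4$ matrix whose only nonzero entries are $(\theta^\pm)_{12}=-\theta$, $(\theta^\pm)_{21}=\theta$, $(\theta^\pm)_{34}=\mp\theta$, $(\theta^\pm)_{43}=\pm\theta$. For a Hermitian $2\times2$ matrix $h=(h_{k\bar l})$, $\iota_{sym}(h)$ is the real symmetric $4\times4$ matrix $$\begin{pmatrix} h_{1\bar1}&0&\frac12(h_{1\bar2}+h_{2\bar1})&\frac1{2i}(h_{2\bar1}-h_{1\bar2})\\ 0&h_{1\bar1}&-\frac1{2i}(h_{2\bar1}-h_{1\bar2})&\frac12(h_{1\bar2}+h_{2\bar1})\\ \frac12(h_{1\bar2}+h_{2\bar1})&-\frac1{2i}(h_{2\bar1}-h_{1\bar2})&h_{2\bar2}&0\\ \frac1{2i}(h_{2\bar1}-h_{1\bar2})&\frac12(h_{1\bar2}+h_{2\bar1})&0&h_{2\bar2}\end{pmatrix};$$ $\iota_{sym}$ is injective. The Ricci curvature of a Hermitian metric $h$ is taken to be $R_{\bar jk}=\partial_{\bar j}\partial_k\log\det[h]$. *)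

(* Defs.v *)
From Stdlib Require Import Reals.
Open Scope R_scope.

(* Coordinates x^1..x^4 of the paper are coord x 0 .. coord x 3. *)
Record R4 := mkR4 { x1 : R; x2 : R; x3 : R; x4 : R }.

Definition coord (x : R4) (k : nat) : R :=
  match k with 0 => x1 x | 1 => x2 x | 2 => x3 x | _ => x4 x end.

Definition upd (x : R4) (k : nat) (t : R) : R4 :=
  match k with
  | 0 => mkR4 t (x2 x) (x3 x) (x4 x)
  | 1 => mkR4 (x1 x) t (x3 x) (x4 x)
  | 2 => mkR4 (x1 x) (x2 x) t (x4 x)
  | _ => mkR4 (x1 x) (x2 x) (x3 x) t
  end.

(* sup-norm distance (induces the usual topology of R^4) *)
Definition dist4 (x y : R4) : R :=
  Rmax (Rmax (Rabs (x1 x - x1 y)) (Rabs (x2 x - x2 y)))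
       (Rmax (Rabs (x3 x - x3 y)) (Rabs (x4 x - x4 y))).

Definition open4 (U : R4 -> Prop) : Prop :=
  forall x, U x -> exists eps, 0 < eps /\ forall y, dist4 x y < eps -> U y.

Definition connected4 (U : R4 -> Prop) : Prop :=
  forall V W : R4 -> Prop, open4 V -> open4 W ->
    (forall x, U x -> V x \/ W x) ->
    (forall x, U x -> V x -> W x -> False) ->
    (forall x, U x -> ~ V x) \/ (forall x, U x -> ~ W x).

Definition cont_at4 (f : R4 -> R) (x : R4) : Prop :=
  forall eps, 0 < eps -> exists del, 0 < del /\
    forall y, dist4 x y < del -> Rabs (f y - f x) < eps.

Definition has_partial (U : R4 -> Prop) (f : R4 -> R) (k : nat) (D : R4 -> R)
  : Prop :=
  forall x, U x -> derivable_pt_lim (fun t => f (upd x k t)) (coord x k) (D x).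

Fixpoint Ck (n : nat) (U : R4 -> Prop) (f : R4 -> R) : Prop :=
  match n with
  | O => forall x, U x -> cont_at4 f x
  | S m => exists D : nat -> R4 -> R,
             (forall k, (k < 4)%nat -> has_partial U f k (D k)) /\
             (forall k, (k < 4)%nat -> Ck m U (D k))
  end.

Definition smooth_on (U : R4 -> Prop) (f : R4 -> R) : Prop :=
  forall n, Ck n U f.

Definition M4 := nat -> nat -> R.

Definition sum4 (f : nat -> R) : R := f 0%nat + f 1%nat + f 2%nat + f 3%nat.

Definition meq (A B : M4) : Prop :=
  forall i j, (i < 4)%nat -> (j < 4)%nat -> A i j = B i j.

Definition E4 : M4 := fun i j => if Nat.eqb i j then 1 else 0.
Definition madd (A B : M4) : M4 := fun i j => A i j + B i j.
Definition msub (A B : M4) : M4 := fun i j => A i j - B i j.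
Definition mscal (c : R) (A : M4) : M4 := fun i j => c * A i j.
Definition mmul (A B : M4) : M4 := fun i j => sum4 (fun k => A i k * B k j).

Definition antisym (A : M4) : Prop :=
  forall i j, (i < 4)%nat -> (j < 4)%nat -> A i j = - A j i.

Definition inverse4 (A N : M4) : Prop := meq (mmul A N) E4 /\ meq (mmul N A) E4.

Definition sgnR (r : R) : R :=
  if Rlt_dec 0 r then 1 else if Rlt_dec r 0 then -1 else 0.

(* Levi-Civita symbol on indices 0..3: sign of the permutation (i,j,k,l) of
   (0,1,2,3), and 0 if two indices coincide. *)
Definition levi (i j k l : nat) : R :=
  sgnR (INR j - INR i) * sgnR (INR k - INR i) * sgnR (INR l - INR i) *
  sgnR (INR k - INR j) * sgnR (INR l - INR j) * sgnR (INR l - INR k).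

Definition star (w : M4) : M4 :=
  fun k l => / 2 * sum4 (fun m => sum4 (fun n => levi k l m n * w m n)).

Definition det4 (A : M4) : R :=
  sum4 (fun i => sum4 (fun j => sum4 (fun k => sum4 (fun l =>
    levi i j k l * A 0%nat i * A 1%nat j * A 2%nat k * A 3%nat l)))).

(* sign s = true means "+", s = false means "-" *)
Definition sgn (s : bool) : R := if s then 1 else -1.

Definition thetaM (s : bool) (th : R) : M4 :=
  fun i j =>
    match i, j with
    | 0%nat, 1%nat => - th
    | 1%nat, 0%nat => th
    | 2%nat, 3%nat => - (sgn s * th)
    | 3%nat, 2%nat => sgn s * th
    | _, _ => 0
    end.

Record Cx := mkC { Re : R; Im : R }.
Definition Cadd (a b : Cx) : Cx := mkC (Re a + Re b) (Im a + Im b).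
Definition Csub (a b : Cx) : Cx := mkC (Re a - Re b) (Im a - Im b).
Definition Cmul (a b : Cx) : Cx :=
  mkC (Re a * Re b - Im a * Im b) (Re a * Im b + Im a * Re b).
Definition Cconj (a : Cx) : Cx := mkC (Re a) (- Im a).
Definition Cr (r : R) : Cx := mkC r 0.
Definition C0 : Cx := Cr 0.

(* A Hermitian 2x2 matrix h = (h_{k bar l}) is given by its real diagonal
   entries h_{1bar1}, h_{2bar2} and h_{1bar2} = hre + i him;
   then h_{2bar1} = conj h_{1bar2} = hre - i him. *)
Record Herm2 := mkH { h11 : R; h22 : R; hre : R; him : R }.

(* entries h_{k bar l}, indices 0..1 (paper's 1..2) *)
Definition hent (h : Herm2) (k l : nat) : Cx :=
  match k, l with
  | 0%nat, 0%nat => Cr (h11 h)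
  | 1%nat, 1%nat => Cr (h22 h)
  | 0%nat, 1%nat => mkC (hre h) (him h)
  | _, _ => mkC (hre h) (- him h)
  end.

Definition detH (h : Herm2) : Cx :=
  Csub (Cmul (hent h 0 0) (hent h 1 1)) (Cmul (hent h 0 1) (hent h 1 0)).

Definition hform (h : Herm2) (v0 v1 : Cx) : Cx :=
  let v k := match k with 0%nat => v0 | _ => v1 end in
  let t k l := Cmul (Cmul (hent h k l) (v k)) (Cconj (v l)) in
  Cadd (Cadd (t 0%nat 0%nat) (t 0%nat 1%nat)) (Cadd (t 1%nat 0%nat) (t 1%nat 1%nat)).

Definition posdefH (h : Herm2) : Prop :=
  forall v0 v1 : Cx, (v0 <> C0 \/ v1 <> C0) -> 0 < Re (hform h v0 v1).
Definition negdefH (h : Herm2) : Prop :=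
  forall v0 v1 : Cx, (v0 <> C0 \/ v1 <> C0) -> Re (hform h v0 v1) < 0.

(* iota_sym, written literally with the paper's complex formula; every entry
   is real for Hermitian h, and we take that real value. *)
Definition iota_sym (h : Herm2) : M4 :=
  let a := Re (Cmul (Cr (/ 2)) (Cadd (hent h 0 1) (hent h 1 0))) in
  (* 1/(2i) = -i/2 *)
  let b := Re (Cmul (mkC 0 (- / 2)) (Csub (hent h 1 0) (hent h 0 1))) in
  fun i j =>
    match i, j with
    | 0%nat, 0%nat => h11 h | 0%nat, 1%nat => 0     | 0%nat, 2%nat => a     | 0%nat, 3%nat => b
    | 1%nat, 0%nat => 0     | 1%nat, 1%nat => h11 h | 1%nat, 2%nat => - b   | 1%nat, 3%nat => a
    | 2%nat, 0%nat => a     | 2%nat, 1%nat => - b   | 2%nat, 2%nat => h22 h | 2%nat, 3%nat => 0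
    | 3%nat, 0%nat => b     | 3%nat, 1%nat => a     | 3%nat, 2%nat => 0     | 3%nat, 3%nat => h22 h
    | _, _ => 0
    end.

Definition smooth_herm (U : R4 -> Prop) (h : R4 -> Herm2) : Prop :=
  smooth_on U (fun x => h11 (h x)) /\ smooth_on U (fun x => h22 (h x)) /\
  smooth_on U (fun x => hre (h x)) /\ smooth_on U (fun x => him (h x)).

(* Complex coordinates z_1 = x^2 + i x^1, z_2 = x^4 + i x^3; with 0-based
   indices, z_{j} (j = 0,1) has real part coordinate 2j+1, imaginary part 2j. *)
Definition re_idx (j : nat) : nat := (2 * j + 1)%nat.
Definition im_idx (j : nat) : nat := (2 * j)%nat.

(* R_{bar j k} = d_{bar z_j} d_{z_k} f  with Wirtinger derivatives
   d_z = 1/2 (d_a - i d_b), d_{bar z} = 1/2 (d_a + i d_b), z = a + i b,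
   given second partials D2 l k = d_l d_k f. *)
Definition wirt (D2 : nat -> nat -> R4 -> R) (j k : nat) (x : R4) : Cx :=
  mkC (/ 4 * (D2 (re_idx j) (re_idx k) x + D2 (im_idx j) (im_idx k) x))
      (/ 4 * (D2 (im_idx j) (re_idx k) x - D2 (re_idx j) (im_idx k) x)).

Definition ricci_flat (U : R4 -> Prop) (h : R4 -> Herm2) : Prop :=
  let f := fun x => ln (Re (detH (h x))) in
  exists (D1 : nat -> R4 -> R) (D2 : nat -> nat -> R4 -> R),
    (forall k, (k < 4)%nat -> has_partial U f k (D1 k)) /\
    (forall l k, (l < 4)%nat -> (k < 4)%nat -> has_partial U (D1 k) l (D2 l k)) /\
    (forall j k x, (j < 2)%nat -> (k < 2)%nat -> U x -> wirt D2 j k x = C0).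

(* Main.v *)
Require Import Defs.
From Stdlib Require Import Reals Lra Lia.
Open Scope R_scope.

Lemma upd_coord x k : upd x k (coord x k) = x.
Proof. destruct x; destruct k as [|[|[|k]]]; reflexivity. Qed.

Lemma dist_upd x k t : dist4 x (upd x k t) = Rabs (coord x k - t).
Proof.
  destruct x as [a b c d]; unfold dist4;
  destruct k as [|[|[|k]]]; simpl; rewrite ?Rminus_diag, ?Rabs_R0;
  match goal with |- context [Rabs ?u] => pose proof (Rabs_pos u) end;
  unfold Rmax; repeat destruct Rle_dec; lra.
Qed.

Lemma deriv_loc_ext f g x l r : 0 < r -> (forall t, Rabs (t - x) < r -> f t = g t) ->
  derivable_pt_lim f x l -> derivable_pt_lim g x l.
Proof.
  intros Hr Hfg H eps He. destruct (H eps He) as [d Hd].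
  assert (Hm : 0 < Rmin d r) by (apply Rmin_pos; [apply cond_pos | lra]).
  exists (mkposreal _ Hm). intros h Hh0 Hh. simpl in Hh.
  rewrite <- !Hfg. apply Hd; auto. eapply Rlt_le_trans; [apply Hh| apply Rmin_l].
  rewrite Rminus_diag, Rabs_R0; lra.
  replace (x + h - x) with h by ring. eapply Rlt_le_trans; [apply Hh| apply Rmin_r].
Qed.

Lemma has_partial_ext U f g k D : open4 U -> (forall x, U x -> f x = g x) ->
  has_partial U f k D -> has_partial U g k D.
Proof.
  intros HU Hfg H x Hx. destruct (HU x Hx) as [e [He Hb]].
  apply (deriv_loc_ext (fun t => f (upd x k t)) _ _ _ e He); [|apply H; auto].
  intros t Ht. apply Hfg, Hb. rewrite dist_upd, Rabs_minus_sym; auto.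
Qed.

Lemma cont_ext U f g x : open4 U -> (forall x, U x -> f x = g x) -> U x ->
  cont_at4 f x -> cont_at4 g x.
Proof.
  intros HU Hfg Hx H eps He. destruct (HU x Hx) as [e [He' Hb]].
  destruct (H eps He) as [d [Hd Hd']].
  exists (Rmin d e). split. apply Rmin_pos; lra.
  intros y Hy. rewrite <- !Hfg; auto.
  apply Hd'. eapply Rlt_le_trans; [apply Hy| apply Rmin_l].
  apply Hb. eapply Rlt_le_trans; [apply Hy| apply Rmin_r].
Qed.

Lemma Ck_ext n U f g : open4 U -> (forall x, U x -> f x = g x) -> Ck n U f -> Ck n U g.
Proof.
  intros HU Hfg. destruct n; simpl.
  - intros H x Hx. eapply cont_ext; eauto.
  - intros [D [H1 H2]]. exists D. split; auto. intros k Hk.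
    eapply has_partial_ext; eauto.
Qed.

Definition Cle n U f := forall m, (m <= n)%nat -> Ck m U f.

Lemma Cle_mono n m U f : (m <= n)%nat -> Cle n U f -> Cle m U f.
Proof. intros Hmn H p Hp. apply H. lia. Qed.

Lemma Cle_partials n U f : open4 U -> Cle (S n) U f ->
  exists D, (forall k, (k < 4)%nat -> has_partial U f k (D k)) /\
            (forall k, (k < 4)%nat -> Cle n U (D k)).
Proof.
  intros HU H. destruct (H (S n) (le_n _)) as [D [H1 H2]].
  exists D. split; auto. intros k Hk m Hm.
  assert (Hm' : (S m <= S n)%nat) by lia.
  destruct (H (S m) Hm') as [D' [H1' H2']].
  apply (Ck_ext m U (D' k)); [auto| |apply H2'; auto].
  intros x Hx. eapply uniqueness_limite; [apply H1'; auto|apply H1; auto].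
Qed.

Lemma Cle_S n U f : Ck 0 U f ->
  (exists D, (forall k, (k < 4)%nat -> has_partial U f k (D k)) /\
            (forall k, (k < 4)%nat -> Cle n U (D k))) -> Cle (S n) U f.
Proof.
  intros H0 [D [H1 H2]] m Hm. destruct m. auto.
  exists D. split; auto. intros k Hk. apply H2; auto. lia.
Qed.

Lemma cont_plus f g x : cont_at4 f x -> cont_at4 g x -> cont_at4 (fun y => f y + g y) x.
Proof.
  intros Hf Hg eps He.
  destruct (Hf (eps/2)) as [d1 [Hd1 H1]]; [lra|].
  destruct (Hg (eps/2)) as [d2 [Hd2 H2]]; [lra|].
  exists (Rmin d1 d2). split. apply Rmin_pos; lra.
  intros y Hy.
  assert (A1 := H1 y (Rlt_le_trans _ _ _ Hy (Rmin_l _ _))).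
  assert (A2 := H2 y (Rlt_le_trans _ _ _ Hy (Rmin_r _ _))).
  replace (f y + g y - (f x + g x)) with ((f y - f x) + (g y - g x)) by ring.
  eapply Rle_lt_trans; [apply Rabs_triang|]. lra.
Qed.

Lemma cont_mult f g x : cont_at4 f x -> cont_at4 g x -> cont_at4 (fun y => f y * g y) x.
Proof.
  intros Hf Hg eps He.
  set (M := Rabs (f x) + Rabs (g x) + 1).
  assert (HM : 0 < M) by (unfold M; pose proof (Rabs_pos (f x)); pose proof (Rabs_pos (g x)); lra).
  set (e := Rmin 1 (eps / M)).
  assert (He1 : 0 < e) by (apply Rmin_pos; [lra| apply Rdiv_lt_0_compat; lra]).
  assert (He2 : e <= 1) by apply Rmin_l.
  assert (He3 : e * M <= eps).
  { assert (e <= eps / M) by apply Rmin_r.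
    apply Rmult_le_compat_r with (r := M) in H; [|lra].
    unfold Rdiv in H. rewrite Rmult_assoc, Rinv_l in H; lra. }
  destruct (Hf e He1) as [d1 [Hd1 H1]].
  destruct (Hg e He1) as [d2 [Hd2 H2]].
  exists (Rmin d1 d2). split. apply Rmin_pos; lra.
  intros y Hy.
  assert (A1 := H1 y (Rlt_le_trans _ _ _ Hy (Rmin_l _ _))).
  assert (A2 := H2 y (Rlt_le_trans _ _ _ Hy (Rmin_r _ _))).
  set (u := f y - f x) in *. set (v := g y - g x) in *.
  replace (f y * g y - f x * g x) with (u * v + f x * v + g x * u) by (unfold u, v; ring).
  eapply Rle_lt_trans. eapply Rle_trans. apply Rabs_triang.
  apply Rplus_le_compat_r. apply Rabs_triang.
  rewrite !Rabs_mult.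
  pose proof (Rabs_pos u). pose proof (Rabs_pos v).
  pose proof (Rabs_pos (f x)). pose proof (Rabs_pos (g x)).
  unfold M in He3.
  assert (Rabs u * Rabs v <= Rabs u * 1) by (apply Rmult_le_compat_l; lra).
  assert (Rabs (f x) * Rabs v <= Rabs (f x) * e) by (apply Rmult_le_compat_l; lra).
  assert (Rabs (g x) * Rabs u <= Rabs (g x) * e) by (apply Rmult_le_compat_l; lra).
  nra.
Qed.

Lemma cont_comp phi f x : cont_at4 f x -> continuity_pt phi (f x) ->
  cont_at4 (fun y => phi (f y)) x.
Proof.
  intros Hf Hp eps He. destruct (Hp eps He) as [a [Ha Ha']].
  destruct (Hf a Ha) as [d [Hd H]]. exists d. split; auto.
  intros y Hy. destruct (Req_dec (f y) (f x)) as [E|E].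
  rewrite E, Rminus_diag, Rabs_R0; lra.
  apply (Ha' (f y)). split. split. exact I. intro E'; apply E; auto.
  simpl. unfold R_dist. apply H; auto.
Qed.

Lemma cont_inv f x : cont_at4 f x -> f x <> 0 -> cont_at4 (fun y => / f y) x.
Proof.
  intros Hf Hn. apply (cont_comp Rinv f x Hf).
  exact (continuity_pt_inv id (f x) (derivable_continuous_pt id (f x) (derivable_pt_id _)) Hn).
Qed.

Lemma cont_const c x : cont_at4 (fun _ => c) x.
Proof. intros eps He. exists 1. split. lra. intros. rewrite Rminus_diag, Rabs_R0; lra. Qed.

Lemma Ck_const n U c : Ck n U (fun _ => c).
Proof.
  revert c; induction n; intro c; simpl. intros; apply cont_const.
  exists (fun _ _ => 0). split. intros k Hk x Hx.
  apply (derivable_pt_lim_const c). intros; apply IHn.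
Qed.

Lemma Ck_plus n U f g : Ck n U f -> Ck n U g -> Ck n U (fun x => f x + g x).
Proof.
  revert f g; induction n; simpl; intros f g Hf Hg.
  intros x Hx; apply cont_plus; auto.
  destruct Hf as [Df [Hf1 Hf2]]. destruct Hg as [Dg [Hg1 Hg2]].
  exists (fun k x => Df k x + Dg k x). split.
  intros k Hk x Hx. apply (derivable_pt_lim_plus (fun t => f (upd x k t)) (fun t => g (upd x k t))).
  apply Hf1; auto. apply Hg1; auto.
  intros k Hk. apply IHn; auto.
Qed.

Lemma Cle_plus n U f g : Cle n U f -> Cle n U g -> Cle n U (fun x => f x + g x).
Proof. intros Hf Hg m Hm. apply Ck_plus; auto. Qed.

Lemma Cle_const n U c : Cle n U (fun _ => c).
Proof. intros m Hm. apply Ck_const. Qed.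

Lemma Cle_mult n U f g : open4 U -> Cle n U f -> Cle n U g -> Cle n U (fun x => f x * g x).
Proof.
  intros HU. revert f g; induction n; intros f g Hf Hg.
  - intros m Hm. assert (m = 0%nat) by lia. subst. intros x Hx.
    apply cont_mult; [apply (Hf 0%nat)| apply (Hg 0%nat)]; auto.
  - apply Cle_S.
    + intros x Hx. apply cont_mult; [apply (Hf 0%nat)| apply (Hg 0%nat)]; auto; lia.
    + destruct (Cle_partials n U f HU Hf) as [Df [Hf1 Hf2]].
      destruct (Cle_partials n U g HU Hg) as [Dg [Hg1 Hg2]].
      exists (fun k x => Df k x * g x + f x * Dg k x). split.
      * intros k Hk x Hx.
        pose proof (derivable_pt_lim_mult (fun t => f (upd x k t)) (fun t => g (upd x k t))
           _ _ _ (Hf1 k Hk x Hx) (Hg1 k Hk x Hx)) as HH.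
        simpl in HH. rewrite !upd_coord in HH. exact HH.
      * intros k Hk. assert (Hn : (n <= S n)%nat) by lia.
        apply Cle_plus; apply IHn; auto; apply (Cle_mono (S n)); auto.
Qed.

Lemma Cle_inv n U f : open4 U -> Cle n U f -> (forall x, U x -> f x <> 0) ->
  Cle n U (fun x => / f x).
Proof.
  intros HU. revert f; induction n; intros f Hf Hn.
  - intros m Hm. assert (m = 0%nat) by lia. subst. intros x Hx.
    apply cont_inv; auto. apply (Hf 0%nat); auto.
  - assert (Hn' : (n <= S n)%nat) by lia.
    assert (IH : Cle n U (fun x => / f x)) by (apply IHn; auto; apply (Cle_mono (S n)); auto).
    apply Cle_S. apply (IH 0%nat). lia.
    destruct (Cle_partials n U f HU Hf) as [Df [Hf1 Hf2]].
    exists (fun k x => (-1) * (Df k x * (/ f x * / f x))). split.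
    * intros k Hk x Hx.
      pose proof (derivable_pt_lim_div (fun _ => 1) (fun t => f (upd x k t))
           _ _ _ (derivable_pt_lim_const 1 _) (Hf1 k Hk x Hx)) as HH.
      simpl in HH. rewrite !upd_coord in HH. specialize (HH (Hn x Hx)).
      unfold div_fct in HH.
      replace ((0 * f x - Df k x * 1) / (f x)²) with ((-1) * (Df k x * (/ f x * / f x))) in HH
        by (unfold Rsqr; field; apply Hn; auto).
      eapply deriv_loc_ext; [exact Rlt_0_1| |exact HH]. intros; simpl; unfold Rdiv; ring.
    * intros k Hk. apply Cle_mult; auto. apply Cle_const.
      apply Cle_mult; auto. apply Cle_mult; auto.
Qed.

Lemma sgnR_INR a b : sgnR (INR a - INR b) =
  if Nat.ltb b a then 1 else if Nat.ltb a b then -1 else 0.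
Proof.
  unfold sgnR. destruct (Nat.ltb_spec b a) as [H|H].
  - apply lt_INR in H. repeat match goal with |- context[Rlt_dec ?a ?b] => destruct (Rlt_dec a b) end; lra.
  - destruct (Nat.ltb_spec a b) as [H'|H'].
    + apply lt_INR in H'. repeat match goal with |- context[Rlt_dec ?a ?b] => destruct (Rlt_dec a b) end; lra.
    + assert (a = b) by lia. subst. replace (INR b - INR b) with 0 by ring.
      repeat match goal with |- context[Rlt_dec ?a ?b] => destruct (Rlt_dec a b) end; lra.
Qed.

Lemma star01 w : star w 0%nat 1%nat = /2 * (w 2%nat 3%nat - w 3%nat 2%nat).
Proof. unfold star, sum4, levi; cbv beta; rewrite !sgnR_INR; cbn [Nat.ltb Nat.leb]. ring. Qed.
Lemma star02 w : star w 0%nat 2%nat = /2 * (w 3%nat 1%nat - w 1%nat 3%nat).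
Proof. unfold star, sum4, levi; cbv beta; rewrite !sgnR_INR; cbn [Nat.ltb Nat.leb]. ring. Qed.
Lemma star03 w : star w 0%nat 3%nat = /2 * (w 1%nat 2%nat - w 2%nat 1%nat).
Proof. unfold star, sum4, levi; cbv beta; rewrite !sgnR_INR; cbn [Nat.ltb Nat.leb]. ring. Qed.
Definition omf (s : bool) (a b c : R) : M4 := fun i j =>
  match i, j with
  | 0%nat,1%nat => a | 1%nat,0%nat => -a | 0%nat,2%nat => b | 2%nat,0%nat => -b
  | 0%nat,3%nat => c | 3%nat,0%nat => -c
  | 2%nat,3%nat => sgn s * a | 3%nat,2%nat => -(sgn s*a)
  | 1%nat,3%nat => -(sgn s * b) | 3%nat,1%nat => sgn s*b
  | 1%nat,2%nat => sgn s * c | 2%nat,1%nat => -(sgn s*c)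
  | _,_ => 0 end.

Lemma sum4_ext f g : (forall k, (k < 4)%nat -> f k = g k) -> sum4 f = sum4 g.
Proof. intros H; unfold sum4; rewrite !H by lia; reflexivity. Qed.

Lemma mmul_meq A A' B B' : meq A A' -> meq B B' -> meq (mmul A B) (mmul A' B').
Proof. intros HA HB i j Hi Hj. unfold mmul. apply sum4_ext. intros k Hk. rewrite HA, HB; auto. Qed.

Lemma msub_meq A A' B B' : meq A A' -> meq B B' -> meq (msub A B) (msub A' B').
Proof. intros HA HB i j Hi Hj. unfold msub. rewrite HA, HB; auto. Qed.

Lemma meq_refl A : meq A A.
Proof. intros i j _ _; reflexivity. Qed.

Lemma inv_lemma M N P mu : meq (mmul N M) E4 -> meq (mmul M P) (mscal mu E4) ->
  meq (mscal mu N) P.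
Proof.
  intros H1 H2 i j Hi Hj.
  assert (E1 : mscal mu N i j = sum4 (fun k => N i k * mmul M P k j)).
  { rewrite (sum4_ext _ (fun k => N i k * mscal mu E4 k j)).
    2:{ intros k Hk. rewrite H2; auto. }
    unfold mscal, E4, sum4. destruct j as [|[|[|[|j]]]]; try lia; simpl; ring. }
  assert (E2 : sum4 (fun k => N i k * mmul M P k j) = sum4 (fun m => mmul N M i m * P m j)).
  { unfold mmul, sum4. ring. }
  rewrite E1, E2, (sum4_ext _ (fun m => E4 i m * P m j)).
  2:{ intros m Hm. rewrite H1; auto. }
  unfold E4, sum4. destruct i as [|[|[|[|i]]]]; try lia; simpl; ring.
Qed.

Lemma ident s a b c th : let Om := omf s a b c in let Th := thetaM (negb s) th in
  meq (mmul (msub E4 (mmul Om Th)) (madd E4 (mmul Om Th)))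
      (mscal (1 - th*th*(a*a+b*b+c*c)) E4).
Proof.
  intros Om Th i j Hi Hj. subst Om Th.
  destruct s; destruct i as [|[|[|[|i]]]]; try lia; destruct j as [|[|[|[|j]]]]; try lia;
  cbv -[Rmult Rplus Ropp Rminus Rinv]; ring.
Qed.

Lemma omega_form s w : antisym w -> meq (star w) (mscal (sgn s) w) ->
  meq w (omf s (w 0%nat 1%nat) (w 0%nat 2%nat) (w 0%nat 3%nat)).
Proof.
  intros Ha Hs.
  pose proof (Hs 0%nat 1%nat ltac:(lia) ltac:(lia)) as S1.
  pose proof (Hs 0%nat 2%nat ltac:(lia) ltac:(lia)) as S2.
  pose proof (Hs 0%nat 3%nat ltac:(lia) ltac:(lia)) as S3.
  rewrite star01 in S1. rewrite star02 in S2. rewrite star03 in S3.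
  unfold mscal in S1, S2, S3.
  intros i j Hi Hj.
  assert (A : forall i j, (i<4)%nat -> (j<4)%nat -> w i j = - w j i) by exact Ha.
  pose proof (A 3%nat 2%nat ltac:(lia) ltac:(lia)).
  pose proof (A 1%nat 3%nat ltac:(lia) ltac:(lia)).
  pose proof (A 2%nat 1%nat ltac:(lia) ltac:(lia)).
  destruct i as [|[|[|[|i]]]]; try lia; destruct j as [|[|[|[|j]]]]; try lia; cbn [omf];
  try (pose proof (A _ _ Hi Hj); lra).
  all: try reflexivity.
  all: lra.
Qed.

Lemma point_vals s th w N hh : antisym w -> meq (star w) (mscal (sgn s) w) ->
  inverse4 (msub E4 (mmul w (thetaM (negb s) th))) N ->
  meq (iota_sym hh) (msub (mscal 2 N) E4) ->
  let a := w 0%nat 1%nat in let b := w 0%nat 2%nat in let c := w 0%nat 3%nat in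
  let mu := 1 - th*th*(a*a+b*b+c*c) in
  mu <> 0 /\ h11 hh = 2 * (1 + a*th) / mu - 1 /\ h22 hh = 2 * (1 - a*th) / mu - 1 /\
  hre hh = 2 * (-(sgn s) * c * th) / mu /\ him hh = - (2 * (sgn s * b * th) / mu).
Proof.
  intros Ha Hs [Hi1 Hi2] Hio a b c mu.
  pose proof (omega_form s w Ha Hs) as Hw. fold a b c in Hw.
  set (Th := thetaM (negb s) th) in *.
  set (Om := omf s a b c) in *.
  assert (HN : meq (mmul N (msub E4 (mmul Om Th))) E4).
  { intros i j Hi Hj. rewrite <- Hi2 by auto. revert i j Hi Hj.
    apply mmul_meq; [apply meq_refl| apply msub_meq; [apply meq_refl| apply mmul_meq; [|apply meq_refl]]].
    intros p q Hp Hq; symmetry; apply Hw; auto. }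
  pose proof (inv_lemma _ _ _ _ HN (ident s a b c th)) as HP.
  fold mu in HP. fold Th Om in HP.
  pose proof (HP 0%nat 0%nat ltac:(lia) ltac:(lia)) as P00.
  pose proof (HP 2%nat 2%nat ltac:(lia) ltac:(lia)) as P22.
  pose proof (HP 0%nat 2%nat ltac:(lia) ltac:(lia)) as P02.
  pose proof (HP 0%nat 3%nat ltac:(lia) ltac:(lia)) as P03.
  subst Om Th.
  pose proof (Hio 0%nat 0%nat ltac:(lia) ltac:(lia)) as I00.
  pose proof (Hio 2%nat 2%nat ltac:(lia) ltac:(lia)) as I22.
  pose proof (Hio 0%nat 2%nat ltac:(lia) ltac:(lia)) as I02.
  pose proof (Hio 0%nat 3%nat ltac:(lia) ltac:(lia)) as I03.
  assert (Hsg : sgn s * sgn (negb s) = -1) by (destruct s; simpl; ring).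
  cbv -[Rmult Rplus Ropp Rminus Rinv sgn a b c mu h11 h22 hre him] in P00, P22, P02, P03, I00, I22, I02, I03.
  assert (Hmu : mu <> 0).
  { intro Hz. rewrite Hz in P00, P22. destruct s; simpl in *; lra. }
  split; [exact Hmu|].
  assert (Ere : hre hh = 2 * N 0%nat 2%nat).
  { replace (hre hh) with (/ (R1+R1) * (hre hh + hre hh) - R0 * (him hh + - him hh)) by field.
    rewrite I02. ring. }
  assert (Eim : him hh = - (2 * N 0%nat 3%nat)).
  { replace (him hh) with (- (R0 * (hre hh - hre hh) - - / (R1 + R1) * (- him hh - him hh))) by field.
    rewrite I03. ring. }
  assert (E00 : N 0%nat 0%nat = (mu * N 0%nat 0%nat) / mu) by (field; auto).
  assert (E22 : N 2%nat 2%nat = (mu * N 2%nat 2%nat) / mu) by (field; auto).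
  assert (E02 : N 0%nat 2%nat = (mu * N 0%nat 2%nat) / mu) by (field; auto).
  assert (E03 : N 0%nat 3%nat = (mu * N 0%nat 3%nat) / mu) by (field; auto).
  rewrite P00 in E00. rewrite P22 in E22. rewrite P02 in E02. rewrite P03 in E03.
  rewrite I00, I22, Ere, Eim, E00, E22, E02, E03.
  destruct s; simpl; repeat split; field; auto.
Qed.
Lemma hform_re hh p q r u : Re (hform hh (mkC p q) (mkC r u)) =
  h11 hh * (p*p+q*q) + h22 hh * (r*r+u*u) + 2 * (hre hh * (p*r+q*u) + him hh * (p*u - q*r)).
Proof. unfold hform, hent, Cmul, Cadd, Cconj, Cr; simpl; ring. Qed.

Lemma nz_sq v : v <> C0 -> 0 < Re v * Re v + Im v * Im v.
Proof.
  destruct v as [p q]; simpl; intro H.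
  destruct (Req_dec p 0); destruct (Req_dec q 0); subst; try nra.
  exfalso; apply H; reflexivity.
Qed.

Lemma key hh p q r u : h11 hh * Re (hform hh (mkC p q) (mkC r u)) =
  (h11 hh * p + hre hh * r + him hh * u)^2 + (h11 hh * q + hre hh * u - him hh * r)^2
  + (h11 hh * h22 hh - hre hh^2 - him hh^2) * (r*r+u*u).
Proof. rewrite hform_re. ring. Qed.

Lemma def_lemma hh : h11 hh * h22 hh - hre hh^2 - him hh^2 = 1 ->
  forall v0 v1, (v0 <> C0 \/ v1 <> C0) -> 0 < h11 hh * Re (hform hh v0 v1).
Proof.
  intros Hd [p q] [r u] Hv. rewrite key, Hd.
  destruct Hv as [Hv|Hv]; apply nz_sq in Hv; simpl in Hv.
  - destruct (Req_dec (r*r+u*u) 0) as [Z|Z].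
    + assert (r = 0) by nra. assert (u = 0) by nra. subst.
      assert (h11 hh <> 0). { intro E. rewrite E in Hd. nra. }
      assert (0 < h11 hh * h11 hh) by (apply Rsqr_pos_lt; auto).
      replace (_ + _ + _) with ((h11 hh * h11 hh) * (p*p+q*q)) by ring.
      apply Rmult_lt_0_compat; auto.
    + assert (H0 : 0 <= r*r+u*u) by nra.
      assert (0 < r*r+u*u) by (destruct (Rle_lt_or_eq_dec _ _ H0); auto; congruence).
      pose proof (pow2_ge_0 (h11 hh * p + hre hh * r + him hh * u)).
      pose proof (pow2_ge_0 (h11 hh * q + hre hh * u - him hh * r)). lra.
  - pose proof (pow2_ge_0 (h11 hh * p + hre hh * r + him hh * u)).
    pose proof (pow2_ge_0 (h11 hh * q + hre hh * u - him hh * r)). lra.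
Qed.

Lemma posdef_of hh : 0 < h11 hh -> h11 hh * h22 hh - hre hh^2 - him hh^2 = 1 -> posdefH hh.
Proof.
  intros H1 Hd v0 v1 Hv. pose proof (def_lemma hh Hd v0 v1 Hv).
  destruct (Rlt_le_dec 0 (Re (hform hh v0 v1))); auto. nra.
Qed.

Lemma negdef_of hh : h11 hh < 0 -> h11 hh * h22 hh - hre hh^2 - him hh^2 = 1 -> negdefH hh.
Proof.
  intros H1 Hd v0 v1 Hv. pose proof (def_lemma hh Hd v0 v1 Hv).
  destruct (Rlt_le_dec (Re (hform hh v0 v1)) 0); auto. nra.
Qed.

Lemma sm_Cle U f n : smooth_on U f -> Cle n U f.
Proof. intros H m _; apply H. Qed.
Lemma Cle_sm U f : (forall n, Cle n U f) -> smooth_on U f.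
Proof. intros H n; apply (H n n); lia. Qed.

Lemma sm_plus U f g : smooth_on U f -> smooth_on U g -> smooth_on U (fun x => f x + g x).
Proof. intros Hf Hg n; apply Ck_plus; auto. Qed.
Lemma sm_const U c : smooth_on U (fun _ => c).
Proof. intros n; apply Ck_const. Qed.
Lemma sm_mult U f g : open4 U -> smooth_on U f -> smooth_on U g -> smooth_on U (fun x => f x * g x).
Proof. intros HU Hf Hg. apply Cle_sm; intro n. apply Cle_mult; auto; apply sm_Cle; auto. Qed.
Lemma sm_inv U f : open4 U -> smooth_on U f -> (forall x, U x -> f x <> 0) -> smooth_on U (fun x => / f x).
Proof. intros HU Hf Hn. apply Cle_sm; intro n. apply Cle_inv; auto; apply sm_Cle; auto. Qed.
Lemma sm_ext U f g : open4 U -> (forall x, U x -> f x = g x) -> smooth_on U f -> smooth_on U g.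
Proof. intros HU He Hf n. eapply Ck_ext; eauto. Qed.
Lemma sm_opp U f : open4 U -> smooth_on U f -> smooth_on U (fun x => - f x).
Proof. intros HU Hf. apply (sm_ext U (fun x => (-1) * f x)); [auto| intros; ring|].
  apply sm_mult; auto. apply sm_const. Qed.
Lemma sm_minus U f g : open4 U -> smooth_on U f -> smooth_on U g -> smooth_on U (fun x => f x - g x).
Proof. intros HU Hf Hg. apply (sm_ext U (fun x => f x + - g x)); [auto| intros; ring|].
  apply sm_plus; auto. apply sm_opp; auto. Qed.

Ltac smt := repeat first [ assumption | apply sm_minus | apply sm_plus | apply sm_mult | apply sm_opp | apply sm_const ].

Theorem theorem3p1 :
  forall (s : bool) (th : R) (U : R4 -> Prop) (omega : R4 -> M4)
         (Ninv : R4 -> M4) (h : R4 -> Herm2),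
    open4 U -> connected4 U ->
    (forall i j, (i < 4)%nat -> (j < 4)%nat -> smooth_on U (fun x => omega x i j)) ->
    (forall x, U x -> antisym (omega x)) ->
    (forall x, U x -> meq (star (omega x)) (mscal (sgn s) (omega x))) ->
    (forall x, U x -> det4 (msub E4 (mmul (omega x) (thetaM (negb s) th))) <> 0) ->
    (* Ninv x = (E4 - omega^pm(x) theta^mp)^{-1} *)
    (forall x, U x -> inverse4 (msub E4 (mmul (omega x) (thetaM (negb s) th))) (Ninv x)) ->
    (* g^pm(x) = 2 Ninv x - E4 lies in the image of iota_sym, h^pm = iota_sym^{-1}[g^pm] *)
    (forall x, U x -> meq (iota_sym (h x)) (msub (mscal 2 (Ninv x)) E4)) ->
    smooth_herm U h /\
    ((forall x, U x -> posdefH (h x)) \/ (forall x, U x -> negdefH (h x))) /\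
    (forall x, U x -> detH (h x) = Cr 1) /\
    ricci_flat U h.
Proof.
  intros s th U omega Ninv h HU Hc Hsm Ha Hs Hdet Hinv Hio.
  set (A := fun x => omega x 0%nat 1%nat).
  set (B := fun x => omega x 0%nat 2%nat).
  set (C := fun x => omega x 0%nat 3%nat).
  set (Mu := fun x => 1 - th*th*(A x * A x + B x * B x + C x * C x)).
  assert (PV : forall x, U x -> Mu x <> 0 /\ h11 (h x) = 2 * (1 + A x*th) / Mu x - 1 /\
     h22 (h x) = 2 * (1 - A x*th) / Mu x - 1 /\
     hre (h x) = 2 * (-(sgn s) * C x * th) / Mu x /\ him (h x) = - (2 * (sgn s * B x * th) / Mu x)).
  { intros x Hx. exact (point_vals s th (omega x) (Ninv x) (h x) (Ha x Hx) (Hs x Hx) (Hinv x Hx) (Hio x Hx)). }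
  assert (smA : smooth_on U A) by (apply Hsm; lia).
  assert (smB : smooth_on U B) by (apply Hsm; lia).
  assert (smC : smooth_on U C) by (apply Hsm; lia).
  assert (smMu : smooth_on U Mu).
  { unfold Mu. apply sm_minus; auto. apply sm_const. apply sm_mult; auto. apply sm_const.
    apply sm_plus; [apply sm_plus|]; apply sm_mult; auto. }
  assert (smIMu : smooth_on U (fun x => / Mu x)).
  { apply sm_inv; auto. intros x Hx; apply (PV x Hx). }
  assert (Hsgn : sgn s * sgn s = 1) by (destruct s; simpl; ring).
  assert (Hdeth : forall x, U x -> h11 (h x) * h22 (h x) - hre (h x)^2 - him (h x)^2 = 1).
  { intros x Hx. destruct (PV x Hx) as [Hm [E1 [E2 [E3 E4']]]].
    rewrite E1, E2, E3, E4'. unfold Mu in Hm |- *. destruct s; simpl; field; auto. }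
  assert (Hh11 : forall x, U x -> h11 (h x) * Mu x = 1 + th*th*(A x*A x+B x*B x+C x*C x) + 2*A x*th).
  { intros x Hx. destruct (PV x Hx) as [Hm [E1 _]]. rewrite E1. unfold Mu in Hm |- *. field; auto. }
  assert (Hnum : forall x, U x -> 0 < 1 + th*th*(A x*A x+B x*B x+C x*C x) + 2*A x*th).
  { intros x Hx. destruct (PV x Hx) as [Hm _]. unfold Mu in Hm.
    destruct (Rtotal_order (1 - th * th * (A x * A x + B x * B x + C x * C x)) 0) as [L|[L|L]].
    - nra.
    - contradiction.
    - nra. }
  assert (Hcont : forall x, U x -> cont_at4 Mu x) by (intros x Hx; apply (smMu 0%nat); auto).
  split.
  { unfold smooth_herm. repeat split.
    - apply (sm_ext U (fun x => 2 * (1 + A x*th) * / Mu x - 1)); auto.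
      + intros x Hx. destruct (PV x Hx) as [_ [E1 _]]. rewrite E1. reflexivity.
      + smt.
    - apply (sm_ext U (fun x => 2 * (1 - A x*th) * / Mu x - 1)); auto.
      + intros x Hx. destruct (PV x Hx) as [_ [_ [E1 _]]]. rewrite E1. reflexivity.
      + smt.
    - apply (sm_ext U (fun x => 2 * (-(sgn s) * C x * th) * / Mu x)); auto.
      + intros x Hx. destruct (PV x Hx) as [_ [_ [_ [E1 _]]]]. rewrite E1. reflexivity.
      + smt.
    - apply (sm_ext U (fun x => - (2 * (sgn s * B x * th) * / Mu x))); auto.
      + intros x Hx. destruct (PV x Hx) as [_ [_ [_ [_ E1]]]]. rewrite E1. reflexivity.
      + smt. }
  split.
  { set (V := fun x => U x /\ 0 < Mu x).
    set (W := fun x => U x /\ Mu x < 0).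
    assert (OV : open4 V).
    { intros x [Hx Hp]. destruct (HU x Hx) as [e [He Hb]].
      destruct (Hcont x Hx (Mu x) Hp) as [d [Hd Hd']].
      exists (Rmin e d). split. apply Rmin_pos; lra.
      intros y Hy. split. apply Hb. eapply Rlt_le_trans; [apply Hy| apply Rmin_l].
      assert (Q := Hd' y (Rlt_le_trans _ _ _ Hy (Rmin_r _ _))).
      apply Rabs_def2 in Q. lra. }
    assert (OW : open4 W).
    { intros x [Hx Hp]. destruct (HU x Hx) as [e [He Hb]].
      destruct (Hcont x Hx (- Mu x)) as [d [Hd Hd']]; [lra|].
      exists (Rmin e d). split. apply Rmin_pos; lra.
      intros y Hy. split. apply Hb. eapply Rlt_le_trans; [apply Hy| apply Rmin_l].
      assert (Q := Hd' y (Rlt_le_trans _ _ _ Hy (Rmin_r _ _))).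
      apply Rabs_def2 in Q. lra. }
    destruct (Hc V W OV OW) as [HV|HW].
    - intros x Hx. destruct (PV x Hx) as [Hm _].
      destruct (Rtotal_order (Mu x) 0) as [L|[L|L]]; [right|contradiction|left]; split; auto.
    - intros x Hx [_ H1] [_ H2]. lra.
    - right. intros x Hx. apply negdef_of; auto.
      assert (Mu x < 0).
      { destruct (PV x Hx) as [Hm _].
        destruct (Rtotal_order (Mu x) 0) as [L|[L|L]]; auto. contradiction.
        exfalso; apply (HV x Hx); split; auto. }
      pose proof (Hh11 x Hx). pose proof (Hnum x Hx). nra.
    - left. intros x Hx. apply posdef_of; auto.
      assert (0 < Mu x).
      { destruct (PV x Hx) as [Hm _].
        destruct (Rtotal_order (Mu x) 0) as [L|[L|L]]; auto.
        exfalso; apply (HW x Hx); split; auto. contradiction. }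
      pose proof (Hh11 x Hx). pose proof (Hnum x Hx). nra. }
  assert (HD : forall x, U x -> detH (h x) = Cr 1).
  { intros x Hx. pose proof (Hdeth x Hx) as D.
    unfold detH, hent, Csub, Cmul, Cr; simpl. f_equal; [nra|ring]. }
  split; [exact HD|].
  exists (fun _ _ => 0), (fun _ _ _ => 0). split; [|split].
  - intros k Hk. apply (has_partial_ext U (fun _ => 0)); auto.
    + intros x Hx. rewrite HD by auto. simpl. rewrite ln_1. reflexivity.
    + intros x Hx. exact (derivable_pt_lim_const 0 _).
  - intros l k Hl Hk x Hx. exact (derivable_pt_lim_const 0 _).
  - intros j k x Hj Hk Hx. unfold wirt, C0, Cr. f_equal; ring.
Qed.
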